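(* Let $(X,Y)$ be random variables with values in $[0,1]$ and let $0\le a\le b\le 1$. If $P\big((X-a)(Y-b)<0\big)=1$ and $P(Y>b)>0$, then the distribution of $(X,Y)$ is not coherent.
   Context: A distribution of $(X,Y)$ on $[0,1]^2$ is coherent if there exist, on some probability space, random variables with that joint distribution and an event $A$ such that $X=P(A\mid X)$ and $Y=P(A\mid Y)$. *)

(* Defs.v *)
From HB Require Import structures.
From mathcomp Require Import all_boot all_order all_algebra.
From mathcomp Require Import all_classical all_reals all_analysis.
Set Implicit Arguments. Unset Strict Implicit. Unset Printing Implicit Defensive.
Import Order.TTheory GRing.Theory Num.Theory.
Local Open Scope classical_set_scope.
Local Open Scope ring_scope.

(* [cond_prob_is P A Z] : Z is a version of P(A | Z), i.e. Z = E[1_A | sigma(Z)] a.s.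
   Since Z is sigma(Z)-measurable, this is the defining property
   P(A ∩ {Z ∈ B}) = E[Z ; Z ∈ B] for all Borel B. *)
Definition cond_prob_is {d : measure_display} {T : measurableType d} {R : realType}
  (P : probability T R) (A : set T) (Z : T -> R) : Prop :=
  forall B : set R, measurable B ->
    P (A `&` Z @^-1` B) = (\int[P]_(w in Z @^-1` B) (Z w)%:E)%E.

Definition same_joint_law {d d' : measure_display} {T : measurableType d}
  {T' : measurableType d'} {R : realType}
  (P : probability T R) (X Y : T -> R) (Q : probability T' R) (X' Y' : T' -> R) : Prop :=
  forall E : set (R * R)%type, measurable E ->
    P ((fun w => (X w, Y w)) @^-1` E) = Q ((fun w => (X' w, Y' w)) @^-1` E).

Definition coherent {d : measure_display} {T : measurableType d} {R : realType}
  (P : probability T R) (X Y : T -> R) : Prop :=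
  exists (d' : measure_display) (T' : measurableType d') (Q : probability T' R)
         (X' Y' : T' -> R) (A : set T'),
    measurable_fun setT X' /\ measurable_fun setT Y' /\ measurable A /\
    same_joint_law P X Y Q X' Y' /\
    cond_prob_is Q A X' /\ cond_prob_is Q A Y'.

(* Main.v *)
Require Import Defs.
From HB Require Import structures.
From mathcomp Require Import all_boot all_order all_algebra.
From mathcomp Require Import all_classical all_reals all_analysis.
From mathcomp Require Import measurable_realfun.
Import Order.TTheory GRing.Theory Num.Theory.
Local Open Scope classical_set_scope.
Local Open Scope ring_scope.

Lemma null_le (d : measure_display) (T : measurableType d) (R : realType)
  (Q : probability T R) (U V N : set T) :
  measurable U -> measurable V -> measurable N -> Q N = 0%E ->
  (forall x, U x -> ~ N x -> V x) -> (Q U <= Q V)%E.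
Proof.
move=> mU mV mN QN h.
apply: (@le_trans _ _ (Q (V `|` N))).
  apply: le_measure; rewrite ?inE //; first exact: measurableU.
  move=> x Ux; have [Nx|Nx] := pselect (N x); [by right|by left; apply: h].
move: (measureU2 Q mV mN) => H; apply: (le_trans H); rewrite -[leRHS]adde0 leeD2l // le_eqVlt; apply/orP; left; apply/eqP; exact: QN.
Qed.

Lemma Gmeas (R : realType) (a b : R) :
  measurable [set p : (R * R)%type | (0 <= p.1 <= 1) /\ (0 <= p.2 <= 1) /\ (p.1 - a) * (p.2 - b) < 0].
Proof.
have mf : measurable_fun setT (fun p : (R * R)%type => (p.1 - a) * (p.2 - b)).
  apply: measurable_funM; apply: measurable_funB => //.
have m1 : measurable [set p : (R * R)%type | 0 <= p.1 <= 1].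
  rewrite (_ : [set p : (R * R)%type | 0 <= p.1 <= 1] = setT `&` fst @^-1` `[0, 1]%classic).
    exact: measurable_fst.
  by apply/seteqP; split => x /=; rewrite in_itv /=; [move=> h; split|case].
have m2 : measurable [set p : (R * R)%type | 0 <= p.2 <= 1].
  rewrite (_ : [set p : (R * R)%type | 0 <= p.2 <= 1] = setT `&` snd @^-1` `[0, 1]%classic).
    exact: measurable_snd.
  by apply/seteqP; split => x /=; rewrite in_itv /=; [move=> h; split|case].
have m3 : measurable [set p : (R * R)%type | (p.1 - a) * (p.2 - b) < 0].
  rewrite (_ : [set p : (R * R)%type | (p.1 - a) * (p.2 - b) < 0] = setT `&` (fun p : (R * R)%type => (p.1 - a) * (p.2 - b)) @^-1` `]-oo, 0[%classic).
    exact: mf.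
  by apply/seteqP; split => x /=; rewrite in_itv /=; [move=> h; split|case].
have -> : [set p : (R * R)%type | (0 <= p.1 <= 1) /\ (0 <= p.2 <= 1) /\ (p.1 - a) * (p.2 - b) < 0]
  = [set p : (R * R)%type | 0 <= p.1 <= 1] `&` ([set p : (R * R)%type | 0 <= p.2 <= 1] `&`
     [set p : (R * R)%type | (p.1 - a) * (p.2 - b) < 0]) by [].
by apply: measurableI => //; apply: measurableI.
Qed.
From mathcomp Require Import lra.
Local Open Scope ereal_scope.
Theorem corollary2p2 (d : measure_display) (T : measurableType d) (R : realType)
  (P : probability T R) (X Y : T -> R) (a b : R) :
  measurable_fun setT X -> measurable_fun setT Y ->
  (forall w, 0 <= X w <= 1)%R -> (forall w, 0 <= Y w <= 1)%R ->
  (0 <= a)%R -> (a <= b)%R -> (b <= 1)%R ->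
  P [set w | (X w - a) * (Y w - b) < 0]%R = 1%E ->
  (0 < P [set w | (b < Y w)%R])%E ->
  ~ coherent P X Y.
Proof.
move=> mX mY hX hY a0 ab b1 Pneg Ppos
  [d' [T' [Q [X' [Y' [A [mX' [mY' [mA [law [cX cY]]]]]]]]]]].
pose G := [set p : (R * R)%type | (0 <= p.1 <= 1) /\ (0 <= p.2 <= 1) /\ (p.1 - a) * (p.2 - b) < 0]%R.
have mG : measurable G := Gmeas R a b.
pose G' := (fun w => (X' w, Y' w)) @^-1` G.
have mXY' : measurable_fun setT (fun w => (X' w, Y' w)) by exact: measurable_fun_pair.
have mG' : measurable G' by rewrite /G' -(setTI (_ @^-1` _)); exact: mXY'.
have QG : Q G' = 1.
  rewrite /G' -law //.
  rewrite (_ : _ @^-1` G = [set w | (X w - a) * (Y w - b) < 0]%R) //.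
  apply/seteqP; split => w /=; first by case=> _ [].
  by move=> h; split; [exact: hX|split; [exact: hY|exact: h]].
pose N := ~` G'.
have mN : measurable N by exact: measurableC.
have QN : Q N = 0 by rewrite /N probability_setC // QG subee.
pose SX := X' @^-1` `[0%R, a[%classic.
pose SY := Y' @^-1` `]b, 1%R]%classic.
have mSX : measurable SX by rewrite /SX -(setTI (_ @^-1` _)); exact: mX'.
have mSY : measurable SY by rewrite /SY -(setTI (_ @^-1` _)); exact: mY'.
have XY w : SX w -> ~ N w -> SY w.
  rewrite /SX /SY /N /G' /G /= !in_itv /= => /andP[x0 xa] /contrapT [] /andP[_ x1] [/andP[y0 y1] h].
  apply/andP; split => //; rewrite ltNge; apply/negP => yb.
  have : (0 <= (X' w - a) * (Y' w - b))%R by nra.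
  by rewrite leNgt h.
have YX w : SY w -> ~ N w -> SX w.
  rewrite /SX /SY /N /G' /G /= !in_itv /= => /andP[yb y1] /contrapT [] /andP[x0 x1] [/andP[y0 _] h].
  apply/andP; split => //; rewrite ltNge; apply/negP => xa.
  have : (0 <= (X' w - a) * (Y' w - b))%R by nra.
  by rewrite leNgt h.
have eqI : Q (A `&` SX) = Q (A `&` SY).
  apply/le_anti/andP; split; apply: (@null_le _ _ _ Q _ _ N _ _ mN QN) => //;
    try exact: measurableI.
  - by move=> w [Aw Sw] Nw; split => //; exact: XY.
  - by move=> w [Aw Sw] Nw; split => //; exact: YX.
have eqp : Q SX = Q SY.
  apply/le_anti/andP; split; apply: (@null_le _ _ _ Q _ _ N _ _ mN QN) => //.
have Qpos : 0 < Q SY.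
  have mE : measurable (setT `&` snd @^-1` `]b, 1%R]%classic : set (R * R)%type).
    exact: measurable_snd.
  have := law _ mE.
  rewrite (_ : _ @^-1` _ = SY); last by apply/seteqP; split => w //=; case.
  move=> <-; rewrite (_ : _ @^-1` _ = [set w | (b < Y w)%R]) //.
  apply/seteqP; split => w /=; rewrite in_itv /=; first by case=> _ /andP[].
  by move=> h; split => //; rewrite h; case/andP: (hY w).
have hIX : Q (A `&` SX) = \int[Q]_(w in SX) (X' w)%:E by exact: cX.
have hIY : Q (A `&` SY) = \int[Q]_(w in SY) (Y' w)%:E by exact: cY.
have B1 : \int[Q]_(w in SX) (X' w)%:E <= a%:E * Q SX.
  rewrite -integral_cst //; apply: ge0_le_integral => //.
  - by move=> w; rewrite /SX /= in_itv /= => /andP[].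
  - by apply/measurable_EFinP; exact: measurable_funTS.
  - by move=> w; rewrite /SX /= in_itv /= lee_fin => /andP[_ /ltW].
pose J := \int[Q]_(w in SY) ((Y' w - b)%:E).
have mJ : measurable_fun SY (fun w => (Y' w - b)%:E).
  apply/measurable_EFinP; apply: measurable_funB => //; exact: measurable_funTS.
have J0 w : SY w -> 0 <= (Y' w - b)%:E.
  by rewrite /SY /= in_itv /= lee_fin subr_ge0 => /andP[/ltW].
have B2 : \int[Q]_(w in SY) (Y' w)%:E = J + b%:E * Q SY.
  rewrite -integral_cst // /J -ge0_integralD //.
  - by apply: eq_integral => w _ /=; rewrite -EFinD subrK.
  - by move=> w _ /=; rewrite lee_fin; exact: le_trans ab.
have Jpos : 0 < J.
  rewrite lt_def integral_ge0 // andbT; apply/negP => /eqP J00.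
  have : \int[Q]_(w in SY) `|(Y' w - b)%:E| = 0.
    rewrite -J00; apply: eq_integral => w; rewrite inE => Sw.
    by rewrite gee0_abs // J0.
  move/(ae_eq_integral_abs Q mSY mJ) => [M [mM QM sub]].
  have : Q SY <= Q M.
    apply: le_measure; rewrite ?inE // => w Sw; apply: sub => /= h.
    move: (h Sw) => /= /eqP; rewrite eqe subr_eq0; apply/negP.
    by move: Sw; rewrite /SY /= in_itv /= => /andP[/gt_eqF ->].
  by rewrite QM leNgt Qpos.
have key : J + b%:E * Q SY <= a%:E * Q SY by rewrite -B2 -hIY -eqI hIX -eqp.
move: key Jpos Qpos (probability_le1 Q mSY); clearbody J; clear B2 eqp hIX hIY eqI B1 mJ J0.
case: (Q SY) => [p| |] //; case: J => [j| |] //.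
rewrite -!EFinM -EFinD !lee_fin !lte_fin => h1 h2 h3 h4.
have h5 : (a * p <= b * p)%R by rewrite ler_wpM2r // ltW.
move: h1 h2 h5; set u := (b * p)%R; set v := (a * p)%R; lra.
Qed.
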